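(* Every topological manifold $X$ of positive dimension admits infinitely many pairwise nonisomorphic nontrivial topological quandle structures.
   Context: A topological quandle structure on a topological space $X$ is a continuous map $f:X\times X\to X$ such that for every $y\in X$ the map $R_y:X\to X$, $x\mapsto f(x,y)$, is a homeomorphism, $f(f(x,y),z)=f(f(x,z),f(y,z))$ for all $x,y,z\in X$, and $f(x,x)=x$ for all $x\in X$. The structure is trivial if $f(x,y)=x$ for all $x,y$, and nontrivial otherwise. Two such structures $f_1,f_2$ on $X$ are isomorphic if there is a homeomorphism $\varphi:X\to X$ with $\varphi(f_1(x,y))=f_2(\varphi(x),\varphi(y))$ for all $x,y\in X$. *)

(* Defs.v *)
From HB Require Import structures.
From mathcomp Require Import all_boot all_order all_algebra.
From mathcomp Require Import all_classical all_reals all_analysis.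
Set Implicit Arguments. Unset Strict Implicit. Unset Printing Implicit Defensive.
Import Order.TTheory GRing.Theory Num.Theory.
Import numFieldNormedType.Exports.
Local Open Scope classical_set_scope.
Local Open Scope ring_scope.

Definition is_homeomorphism (X Y : topologicalType) (g : X -> Y) : Prop :=
  exists h : Y -> X,
    [/\ continuous g, continuous h, cancel g h & cancel h g].

Definition locally_euclidean (R : realType) (n : nat) (X : topologicalType) : Prop :=
  forall x : X, exists U : set X, exists phi : X -> 'rV[R]_n,
    exists psi : 'rV[R]_n -> X,
    [/\ open U, U x, open (phi @` U),
        {within U, continuous phi} &
        ({within phi @` U, continuous psi} /\
         (forall y, U y -> psi (phi y) = y))].

Definition topological_manifold (R : realType) (n : nat) (X : topologicalType) : Prop :=
  [/\ hausdorff_space X, @second_countable X & locally_euclidean R n X].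

Definition topological_quandle (X : topologicalType) (f : X * X -> X) : Prop :=
  [/\ continuous f,
      (forall y : X, is_homeomorphism (fun x => f (x, y))),
      (forall x y z : X, f (f (x, y), z) = f (f (x, z), f (y, z))) &
      (forall x : X, f (x, x) = x)].

Definition trivial_quandle (X : topologicalType) (f : X * X -> X) : Prop :=
  forall x y : X, f (x, y) = x.

Definition quandle_isomorphic (X : topologicalType) (f1 f2 : X * X -> X) : Prop :=
  exists phi : X -> X, is_homeomorphism phi /\
    forall x y : X, phi (f1 (x, y)) = f2 (phi x, phi y).

(* Main.v *)
Require Import Defs.
From mathcomp Require Import all_boot all_order all_algebra.
From mathcomp Require Import all_classical all_reals all_analysis.
From mathcomp Require Import ring lra zify.
Set Implicit Arguments. Unset Strict Implicit. Unset Printing Implicit Defensive.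
Import Order.TTheory GRing.Theory Num.Theory.
Import numFieldNormedType.Exports.
Local Open Scope classical_set_scope.
Local Open Scope ring_scope.

Definition Pk (T : Type) (f : T * T -> T) (M : nat) :=
  exists ys : 'I_M -> T, (forall i, exists x, f (x, ys i) <> x) /\
    (forall i j x, i != j -> f (x, ys i) <> x -> f (x, ys j) = x).

Lemma Pk_iso12 (X : topologicalType) (f1 f2 : X * X -> X) M :
  quandle_isomorphic f1 f2 -> Pk f2 M -> Pk f1 M.
Proof.
move=> [ph [[h [_ _ c1 c2]] hph]] [ys [hmv hdis]].
have phinj : injective ph := can_inj c1.
exists (fun i => h (ys i)); split.
  move=> i; have [x' hx'] := hmv i; exists (h x') => he; apply: hx'.
  by rewrite -{2}(c2 x') -he hph !c2.
move=> i j x ij hi; apply: (phinj); rewrite hph c2; apply: (hdis i) => //.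
by move=> he; apply: hi; apply: (phinj); rewrite hph c2.
Qed.

Lemma Pk_iso21 (X : topologicalType) (f1 f2 : X * X -> X) M :
  quandle_isomorphic f1 f2 -> Pk f1 M -> Pk f2 M.
Proof.
move=> [ph [[h [_ _ c1 c2]] hph]] [ys [hmv hdis]].
have phinj : injective ph := can_inj c1.
exists (fun i => ph (ys i)); split.
  move=> i; have [x hx] := hmv i; exists (ph x) => he; apply: hx.
  by apply: (phinj); rewrite hph.
move=> i j x' ij hi; rewrite -(c2 x') -hph (hdis i j) //.
by move=> he; apply: hi; rewrite -(c2 x') -hph he.
Qed.
Section Alg.
Variables (R : realType) (n N : nat).
Variables (c : 'I_N -> 'rV[R]_n) (rho : R).
Hypothesis rho_gt0 : 0 < rho.
Hypothesis c_far : forall i j, i != j -> 3 * rho <= `|c i - c j|.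

Definition gg (l s : R) := l / (1 + (l - 1) * s).
Definition sc (m : 'I_N) (p : 'rV[R]_n) : R := Num.min (1 : R) (`|p - c m| / rho).
Definition ww m p l := (gg l (sc m p) - 1) *: (p - c m).
Definition HH p (L : 'I_N -> R) := p + \sum_m ww m p (L m).

Lemma den_gt0 (l s : R) : 0 < l -> 0 <= s <= 1 -> 0 < 1 + (l - 1) * s.
Proof.
move=> l0 /andP[s0 s1]; have [->|s1'] := eqVneq s 1; first by lra.
have : s < 1 by rewrite lt_neqAle s1' s1.
by nra.
Qed.

Lemma sc_ge0 m p : 0 <= sc m p.
Proof. by rewrite /sc le_min ler01 /= divr_ge0 // ltW. Qed.

Lemma sc_le1 m p : sc m p <= 1.
Proof. by rewrite /sc ge_min lexx. Qed.

Lemma sc_range m p : 0 <= sc m p <= 1.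
Proof. by rewrite sc_ge0 sc_le1. Qed.

Lemma gg_gt0 (l s : R) : 0 < l -> 0 <= s <= 1 -> 0 < gg l s.
Proof. by move=> l0 hs; rewrite /gg divr_gt0 // den_gt0. Qed.

Lemma sc_out m p : rho <= `|p - c m| -> sc m p = 1.
Proof. by move=> h; rewrite /sc min_l // ler_pdivlMr // mul1r. Qed.

Lemma sc_in m p : `|p - c m| < rho -> sc m p = `|p - c m| / rho.
Proof. by move=> h; rewrite /sc min_r // ?ler_pdivrMr ?mul1r // ltW. Qed.

Lemma ww_out m p l : 0 < l -> rho <= `|p - c m| -> ww m p l = 0.
Proof.
move=> l0 h; rewrite /ww sc_out // /gg mulr1 addrCA subrr addr0 divff ?gt_eqF //.
by rewrite subrr scale0r.
Qed.

Lemma ww_one m p : ww m p 1 = 0.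
Proof. by rewrite /ww /gg subrr mul0r addr0 divr1 subrr scale0r. Qed.

Lemma far_other m j p : j != m -> `|p - c m| < rho -> rho <= `|p - c j|.
Proof.
move=> jm h; have := c_far jm; have := ler_distD p (c j) (c m).
rewrite (distrC (c j) p) => h1 h2.
move: h1 h2 h; set A := `|c j - c m|; set B := `|p - c j|; set C := `|p - c m|.
move=> h1 h2 h3; have := rho_gt0; lra.
Qed.

Lemma sum_in m p L : (forall j, 0 < L j) -> `|p - c m| < rho ->
  \sum_j ww j p (L j) = ww m p (L m).
Proof.
move=> L0 h; rewrite (bigD1 m) //= big1 ?addr0 //.
by move=> j jm; apply: ww_out; [exact: L0 | exact: (far_other jm h)].
Qed.

Lemma sum_out p L : (forall j, 0 < L j) -> (forall j, rho <= `|p - c j|) ->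
  \sum_j ww j p (L j) = 0.
Proof. by move=> L0 h; rewrite big1 // => j _; apply: ww_out; [exact: L0 | exact: h]. Qed.

Lemma HH_out p L : (forall j, 0 < L j) -> (forall j, rho <= `|p - c j|) ->
  HH p L = p.
Proof. by move=> L0 h; rewrite /HH sum_out // addr0. Qed.

Lemma HH_in m p L : (forall j, 0 < L j) -> `|p - c m| < rho ->
  HH p L = c m + gg (L m) (sc m p) *: (p - c m).
Proof.
move=> L0 h; rewrite /HH (sum_in L0 h) /ww scalerBl scale1r.
set u := gg _ _ *: _; rewrite opprB addrCA addrC; congr (_ + _).
by rewrite addrCA subrr addr0.
Qed.

Lemma HH_in_norm m p L : (forall j, 0 < L j) -> `|p - c m| < rho ->
  `|HH p L - c m| = gg (L m) (sc m p) * `|p - c m|.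
Proof.
move=> L0 h; rewrite (@HH_in m p L L0 h) addrC addKr normrZ gtr0_norm //.
by apply: gg_gt0 => //; apply: sc_range.
Qed.

Lemma HH_in_in m p L : (forall j, 0 < L j) -> `|p - c m| < rho ->
  `|HH p L - c m| < rho.
Proof.
move=> L0 h; rewrite (@HH_in_norm m p L L0 h) /gg (sc_in h).
set t := `|p - c m|; have t0 : 0 <= t by exact: normr_ge0.
have l0 := L0 m; set l := L m.
have hs : 0 <= t / rho <= 1.
  by rewrite divr_ge0 ?(ltW rho_gt0) //= ler_pdivrMr // mul1r (ltW h).
have d0 := den_gt0 l0 hs.
rewrite mulrAC ltr_pdivrMr //.
have -> : t = (t / rho) * rho by rewrite mulfVK ?gt_eqF.
set s := t / rho.
have s1 : s < 1 by rewrite ltr_pdivrMr // mul1r.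
rewrite mulfK ?gt_eqF //.
have : 0 < rho * (1 - s) by rewrite mulr_gt0 // subr_gt0.
nra.
Qed.

Lemma gg_mul l l' s : 0 < l -> 0 < l' -> 0 <= s <= 1 ->
  gg l (gg l' s * s) * gg l' s = gg (l * l') s.
Proof.
move=> l0 l'0 hs; have d' := den_gt0 l'0 hs.
have hll : 0 < l * l' by rewrite mulr_gt0.
have d := den_gt0 hll hs.
rewrite /gg.
have -> : 1 + (l - 1) * (l' / (1 + (l' - 1) * s) * s) =
          (1 + (l * l' - 1) * s) / (1 + (l' - 1) * s).
  by field; rewrite gt_eqF.
by field; rewrite !gt_eqF.
Qed.

Lemma HH_comp p L L' : (forall j, 0 < L j) -> (forall j, 0 < L' j) ->
  HH (HH p L') L = HH p (fun j => L j * L' j).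
Proof.
move=> L0 L'0; have LL0 : forall j, 0 < L j * L' j by move=> j; rewrite mulr_gt0.
case: (pselect (exists m, `|p - c m| < rho)) => [[m h]|hn]; last first.
  have hout : forall j, rho <= `|p - c j|.
    by move=> j; rewrite leNgt; apply/negP => hj; apply: hn; exists j.
  by rewrite !HH_out.
have h' := @HH_in_in m p L' L'0 h.
have hs' : sc m (HH p L') = gg (L' m) (sc m p) * sc m p.
  by rewrite (sc_in h') (@HH_in_norm m p L' L'0 h) (sc_in h) mulrA.
rewrite (@HH_in m _ L L0 h') hs' (@HH_in m p _ LL0 h) (@HH_in m p L' L'0 h).
have e x : c m + x - c m = x by rewrite addrC addKr.
rewrite e scalerA; congr (_ + _ *: _).
exact: gg_mul (L0 m) (L'0 m) (sc_range m p).
Qed.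

Lemma HH_one p : HH p (fun _ => 1) = p.
Proof. by rewrite /HH big1 ?addr0 // => j _; rewrite ww_one. Qed.

Lemma HH_moved p L : (forall j, 0 < L j) -> HH p L != p ->
  exists m, `|p - c m| < rho /\ L m != 1.
Proof.
move=> L0 hne.
case: (pselect (exists m, `|p - c m| < rho)) => [[m h]|hn]; last first.
  have hout : forall j, rho <= `|p - c j|.
    by move=> j; rewrite leNgt; apply/negP => hj; apply: hn; exists j.
  by rewrite HH_out ?eqxx in hne.
exists m; split => //; apply/eqP => Lm1; move: hne.
rewrite (@HH_in m p L L0 h) Lm1 /gg subrr mul0r addr0 divr1 scale1r.
by rewrite addrC subrK eqxx.
Qed.

Lemma HH_moves m q L : (forall j, 0 < L j) -> `|q - c m| < rho ->
  q != c m -> L m != 1 -> HH q L != q.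
Proof.
move=> L0 h qc Lm; rewrite (@HH_in m q L L0 h) (sc_in h).
apply/negP => /eqP heq.
have hv : (gg (L m) (`|q - c m| / rho) - 1) *: (q - c m) = 0.
  have hg : gg (L m) (`|q - c m| / rho) *: (q - c m) = q - c m.
    by rewrite -[in RHS]heq (addrC (c m)) addrK.
  by rewrite scalerBl scale1r hg subrr.
move: hv => /eqP; rewrite scaler_eq0 !subr_eq0 (negPf qc) orbF => /eqP hg.
set s := `|q - c m| / rho in hg.
have s0 : 0 <= s by rewrite divr_ge0 // ltW.
have s1 : s < 1 by rewrite ltr_pdivrMr // mul1r.
have hs : 0 <= s <= 1 by rewrite s0 ltW.
have d := den_gt0 (L0 m) hs.
move: hg; rewrite /gg => /(congr1 (fun t => t * (1 + (L m - 1) * s))).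
rewrite mulfVK ?gt_eqF // mul1r => hg.
have : (L m - 1) * (1 - s) = 0.
  by rewrite mulrBr mulr1; apply/eqP; rewrite subr_eq0; apply/eqP; move: hg; lra.
move/eqP; rewrite mulf_eq0 subr_eq0 (negPf Lm) /= subr_eq0 => /eqP s1'.
by move: s1; rewrite -s1' ltxx.
Qed.
End Alg.

Section Geo.
Variables (R : realType) (n N : nat) (a e : 'rV[R]_n) (r : R).
Hypotheses (r0 : 0 < r) (e1 : `|e| = 1) (N0 : (0 < N)%N).

Definition rho : R := r / (6 * N%:R).
Definition PP (j : nat) : 'rV[R]_n := a + (3 * rho * j%:R) *: e.
Definition cc (m : 'I_N) := PP m.
Definition dd (m : 'I_N) := PP (N + m).

Lemma rho_gt0 : 0 < rho.
Proof. by rewrite divr_gt0 // mulr_gt0 // ltr0n. Qed.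

Lemma rhoN : rho * (6 * N%:R) = r.
Proof. by rewrite mulfVK // gt_eqF // mulr_gt0 // ltr0n. Qed.

Lemma nat_dist (i j : nat) : i != j -> 1 <= `|i%:R - j%:R : R|.
Proof.
move=> ij; rewrite ler_normr.
have [h|h|h] := ltngtP i j; last by rewrite h eqxx in ij.
- have : (i.+1 <= j)%N := h; rewrite -(ler_nat R) -natr1 => h'.
  by apply/orP; right; lra.
- have : (j.+1 <= i)%N := h; rewrite -(ler_nat R) -natr1 => h'.
  by apply/orP; left; lra.
Qed.

Lemma PP_far i j : i != j -> 3 * rho <= `|PP i - PP j|.
Proof.
move=> ij; rewrite /PP opprD addrACA subrr add0r -scalerBl.
rewrite normrZ e1 mulr1 -mulrBr normrM ger0_norm; last first.
  by rewrite mulr_ge0 // ltW // rho_gt0.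
have := nat_dist ij; have := rho_gt0; nra.
Qed.

Lemma PP_a j : `|PP j - a| = 3 * rho * j%:R.
Proof.
rewrite /PP addrC addKr normrZ e1 mulr1 ger0_norm //.
by rewrite !mulr_ge0 // ltW // rho_gt0.
Qed.

Lemma cc_far i j : i != j -> 3 * rho <= `|cc i - cc j|.
Proof. by move=> ij; apply: PP_far. Qed.

Lemma dd_far i j : i != j -> 3 * rho <= `|dd i - dd j|.
Proof.
by move=> ij; apply: PP_far; rewrite eqn_add2l.
Qed.

Lemma cd_far i j : 3 * rho <= `|cc i - dd j|.
Proof.
apply: PP_far; apply/negP => /eqP h.
by have := ltn_ord i; rewrite h; lia.
Qed.

(* everything happens in the closed ball K of radius r - rho *)
Lemma near_K j p : (j < 2 * N)%N -> `|p - PP j| < rho -> `|a - p| <= r - rho.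
Proof.
move=> jN h; have h1 := ler_distD (PP j) a p.
have h2 : `|a - PP j| = 3 * rho * j%:R by rewrite distrC PP_a.
have h3 : `|PP j - p| = `|p - PP j| by rewrite distrC.
rewrite h2 h3 in h1.
have : (j.+1 <= 2 * N)%N := jN; rewrite -(ler_nat R) -natr1 natrM => hj.
have hr := rhoN; have r1 := rho_gt0.
have : rho * (j%:R + 1) <= rho * (2 * N%:R) by rewrite ler_wpM2l // ltW.
lra.
Qed.

Lemma cc_K m p : `|p - cc m| < rho -> `|a - p| <= r - rho.
Proof. by apply: near_K; have := ltn_ord m; lia. Qed.

Lemma dd_K m p : `|p - dd m| < rho -> `|a - p| <= r - rho.
Proof. by apply: near_K; have := ltn_ord m; lia. Qed.

End Geo.

Section Top.
Variables (R : realType) (n N : nat) (X : topologicalType) (U : set X)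
  (phi : X -> 'rV[R]_n) (psi : 'rV[R]_n -> X) (a e : 'rV[R]_n) (r : R).
Hypotheses (hU : open U) (hV : open (phi @` U))
  (phic : {within U, continuous phi})
  (psic : {within phi @` U, continuous psi})
  (psiphi : forall y, U y -> psi (phi y) = y)
  (hX : hausdorff_space X) (r0 : 0 < r) (e1 : `|e| = 1) (N0 : (0 < N)%N)
  (hball : ball a r `<=` phi @` U).

Local Notation rh := (rho N r).
Local Notation c := (cc a e r).
Local Notation d := (dd a e r).
Local Notation V0 := (phi @` U).

Let rpos : 0 < rh := rho_gt0 r0 N0.
Let cfar := cc_far a r0 e1 N0.

Definition tent (m : 'I_N) (p : 'rV[R]_n) : R := Num.max 0 (rh - `|p - d m|).
Definition beta (m : 'I_N) (y : X) : R := if `[< U y >] then tent m (phi y) else 0.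
Definition Lam (y : X) (m : 'I_N) : R := 1 + beta m y.
Definition QQ (L : 'I_N -> R) (x : X) : X :=
  if `[< U x >] then psi (HH c rh (phi x) L) else x.

Lemma psi_U q : V0 q -> U (psi q).
Proof. by case=> u Uu <-; rewrite psiphi. Qed.

Lemma phipsi q : V0 q -> phi (psi q) = q.
Proof. by case=> u Uu <-; rewrite psiphi. Qed.

Lemma K_V0 p : `|a - p| <= r - rh -> V0 p.
Proof.
move=> h; apply: hball; rewrite -ball_normE /ball_ /=.
by apply: le_lt_trans h _; rewrite ltrBlDr ltrDl.
Qed.

Lemma HH_K p (L : 'I_N -> R) : (forall j, 0 < L j) -> HH c rh p L != p -> `|a - p| <= r - rh.
Proof.
move=> L0 /(HH_moved rpos cfar L0) [m [h _]].
exact: cc_K r0 e1 N0 _ _ h.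
Qed.

Lemma HH_V0 p (L : 'I_N -> R) : (forall j, 0 < L j) -> V0 p -> V0 (HH c rh p L).
Proof.
move=> L0 Vp; have [->//|hne] := eqVneq (HH c rh p L) p.
have [m [h _]] := HH_moved rpos cfar L0 hne.
apply: K_V0; apply: (cc_K r0 e1 N0 (m := m)).
exact: (@HH_in_in _ _ _ c rh rpos cfar m p L L0 h).
Qed.

Lemma tent_ge0 m p : 0 <= tent m p.
Proof. by rewrite /tent le_max lexx. Qed.

Lemma tent_ne0 m p : tent m p != 0 -> `|p - d m| < rh.
Proof.
move=> hne; rewrite ltNge; apply/negP => hle; move: hne.
by rewrite /tent max_l ?eqxx // subr_le0.
Qed.

Lemma tent_c m (j : 'I_N) p : `|p - c j| < rh -> tent m p = 0.
Proof.
move=> h; rewrite /tent max_l //.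
have := cd_far a r0 e1 N0 j m; have := ler_distD p (c j) (d m).
rewrite (distrC (c j) p) subr_le0.
move: h; set A := `|p - c j|; set B := `|p - d m|; set C := `|c j - d m|.
move=> h1 h2 h3; have := rpos; lra.
Qed.

Lemma tent_HH m p (L : 'I_N -> R) : (forall j, 0 < L j) -> tent m (HH c rh p L) = tent m p.
Proof.
move=> L0; have [->//|hne] := eqVneq (HH c rh p L) p.
have [j [h _]] := HH_moved rpos cfar L0 hne.
have h' := (@HH_in_in _ _ _ c rh rpos cfar j p L L0 h).
by rewrite (tent_c m h) (tent_c m h').
Qed.

Lemma beta_ge0 m y : 0 <= beta m y.
Proof. by rewrite /beta; case: ifP => _ //; apply: tent_ge0. Qed.

Lemma Lam_gt0 y m : 0 < Lam y m.
Proof. by rewrite /Lam; have := beta_ge0 m y; lra. Qed.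

Lemma QQ_notU (L : 'I_N -> R) x : ~ U x -> QQ L x = x.
Proof. by move=> h; rewrite /QQ; case: asboolP. Qed.

Lemma QQ_U (L : 'I_N -> R) x : U x -> QQ L x = psi (HH c rh (phi x) L).
Proof. by move=> h; rewrite /QQ; case: asboolP. Qed.

Lemma QQ_Ueq (L : 'I_N -> R) x : (forall j, 0 < L j) -> U (QQ L x) <-> U x.
Proof.
move=> L0; case: (pselect (U x)) => h; last by rewrite QQ_notU.
rewrite QQ_U //; split => // _; apply: psi_U; apply: HH_V0 => //.
Qed.

Lemma QQ_comp (L L' : 'I_N -> R) x : (forall j, 0 < L j) -> (forall j, 0 < L' j) ->
  QQ L (QQ L' x) = QQ (fun j => L j * L' j) x.
Proof.
move=> L0 L'0; case: (pselect (U x)) => h; last by rewrite !QQ_notU // QQ_Ueq.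
have hV' : V0 (HH c rh (phi x) L') by apply: HH_V0 => //; exists x.
rewrite (QQ_U _ h) QQ_U; last exact: psi_U.
by rewrite phipsi // HH_comp // QQ_U.
Qed.

Lemma QQ_one x : QQ (fun _ => 1) x = x.
Proof.
case: (pselect (U x)) => h; last by rewrite QQ_notU.
by rewrite QQ_U // HH_one psiphi.
Qed.

Lemma beta_QQ m (L : 'I_N -> R) y : (forall j, 0 < L j) -> beta m (QQ L y) = beta m y.
Proof.
move=> L0; case: (pselect (U y)) => h; last by rewrite QQ_notU.
have hV' : V0 (HH c rh (phi y) L) by apply: HH_V0 => //; exists y.
rewrite /beta; case: asboolP => hq; last by exfalso; apply: hq; apply/QQ_Ueq.
case: asboolP => // _.
by rewrite QQ_U // phipsi // tent_HH.
Qed.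

Lemma Lam_QQ (L : 'I_N -> R) y : (forall j, 0 < L j) -> Lam (QQ L y) = Lam y.
Proof. by move=> L0; apply: funext => m; rewrite /Lam beta_QQ. Qed.

Lemma QQ_idem x : QQ (Lam x) x = x.
Proof.
case: (pselect (U x)) => h; last by rewrite QQ_notU.
rewrite QQ_U //; have [->|hne] := eqVneq (HH c rh (phi x) (Lam x)) (phi x).
  by rewrite psiphi.
have [m [hm Lm]] := HH_moved rpos cfar (Lam_gt0 x) hne.
exfalso; move: Lm; rewrite /Lam /beta; case: asboolP => // _.
rewrite (tent_c m hm) addr0 eqxx //.
Qed.


Lemma sc_cont (m : 'I_N) : continuous (sc c rh m).
Proof.
move=> p; rewrite /sc.
apply: (@continuous_min _ _ (fun=> 1) (fun q : 'rV[R]_n => `|q - c m| / rh) p).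
  exact: cst_continuous.
apply: (@cvgM _ _ _ (nbhs_filter p) (fun q : 'rV[R]_n => `|q - c m|) (fun=> rh^-1)); last exact: cvg_cst.
by apply: cvg_norm; apply: cvgB; [exact: cvg_id | exact: cvg_cst].
Qed.

Lemma ww_cvg {T : Type} (F : set_system T) {FF : Filter F} (m : 'I_N)
  (pf : T -> 'rV[R]_n) (lf : T -> R) (p0 : 'rV[R]_n) (l0 : R) : 0 < l0 ->
  pf @ F --> p0 -> lf @ F --> l0 ->
  (fun t => ww c rh m (pf t) (lf t)) @ F --> ww c rh m p0 l0.
Proof.
move=> l0p hp hl.
have hs : (fun t => sc c rh m (pf t)) @ F --> sc c rh m p0.
  exact: (@continuous_cvg _ _ _ F FF pf (sc c rh m) p0 (@sc_cont m p0) hp).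
rewrite /ww /gg; apply: cvgZ; last by apply: cvgB; [exact: hp | exact: cvg_cst].
apply: cvgB; last exact: cvg_cst.
apply: cvgM; first exact: hl.
apply: cvgV; first by rewrite gt_eqF // den_gt0 // sc_range.
apply: cvgD; first exact: cvg_cst.
by apply: cvgM => //; apply: cvgB => //; exact: cvg_cst.
Qed.

Lemma HH_cvg {T : Type} (F : set_system T) {FF : Filter F}
  (pf : T -> 'rV[R]_n) (lf : T -> 'I_N -> R) (p0 : 'rV[R]_n) (l0 : 'I_N -> R) :
  (forall m, 0 < l0 m) ->
  pf @ F --> p0 -> (forall m, (fun t => lf t m) @ F --> l0 m) ->
  (fun t => HH c rh (pf t) (lf t)) @ F --> HH c rh p0 l0.
Proof.
move=> l0p hp hl; rewrite /HH; apply: cvgD; first exact: hp.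
apply: (@cvg_big _ _ +%R 0 xpredT add_continuous).
by move=> m _; apply: ww_cvg.
Qed.

Definition Kset := closed_ball a (r - rh).
Definition Cset := psi @` Kset.

Lemma rK0 : 0 < r - rh.
Proof.
have := (@rhoN R N r N0); have hN : (1 : R) <= N%:R by rewrite ler1n.
have := rpos; nra.
Qed.

Lemma Kset_mem p : Kset p <-> `|a - p| <= r - rh.
Proof. by rewrite /Kset closed_ballE //; exact: rK0. Qed.

Lemma Kset_V0 : Kset `<=` V0.
Proof. by move=> p /Kset_mem; apply: K_V0. Qed.

Lemma Kset_compact : compact Kset.
Proof.
apply: bounded_closed_compact; last exact: closed_ball_closed.
exists (`|a| + r); split; first by rewrite num_real.
move=> M hM x /Kset_mem Kx.
have h1 := ler_distD a 0 x; rewrite !sub0r !normrN in h1.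
rewrite /=; have := rpos; have := normr_ge0 a; lra.
Qed.

Lemma Cset_closed : closed Cset.
Proof.
apply: compact_closed => //; apply: continuous_compact; last exact: Kset_compact.
exact: continuous_subspaceW Kset_V0 psic.
Qed.

Lemma Cset_U : Cset `<=` U.
Proof. by move=> x [p /Kset_V0 Vp <-]; apply: psi_U. Qed.

Lemma QQ_outC (L : 'I_N -> R) x : (forall j, 0 < L j) -> ~ Cset x -> QQ L x = x.
Proof.
move=> L0 nC; case: (pselect (U x)) => h; last by rewrite QQ_notU.
rewrite QQ_U //; have [->|hne] := eqVneq (HH c rh (phi x) L) (phi x).
  by rewrite psiphi.
exfalso; apply: nC; exists (phi x); last exact: psiphi.
by apply/Kset_mem; apply: HH_K hne.
Qed.

Lemma beta_outC m y : ~ Cset y -> beta m y = 0.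
Proof.
move=> nC; rewrite /beta; case: asboolP => // h.
apply/eqP; apply/negP => /negP /tent_ne0 hd; apply: nC.
exists (phi y); last exact: psiphi.
by apply/Kset_mem; apply: (dd_K r0 e1 N0 hd).
Qed.

Lemma phi_cont x : U x -> {for x, continuous phi}.
Proof.
move=> h; have := phic; rewrite continuous_open_subspace // => hc.
by apply: hc; rewrite inE.
Qed.

Lemma tent_cont m : continuous (tent m).
Proof.
move=> p; rewrite /tent.
apply: (@continuous_max _ _ (fun=> 0) (fun q : 'rV[R]_n => rh - `|q - d m|) p).
  exact: cst_continuous.
apply: (@cvgB _ _ _ _ (nbhs_filter p) (fun=> rh) (fun q : 'rV[R]_n => `|q - d m|)).
  exact: cvg_cst.
by apply: cvg_norm; apply: cvgB; [exact: cvg_id | exact: cvg_cst].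
Qed.

Lemma beta_cont m : continuous (beta m).
Proof.
move=> y0; case: (pselect (U y0)) => h.
  have E : {near y0, (tent m \o phi) =1 beta m}.
    near=> y; rewrite /beta /=; case: asboolP => // hy; exfalso; apply: hy.
    near: y; exact: open_nbhs_nbhs.
  apply: cvg_trans (near_eq_cvg E) _.
  have -> : beta m y0 = tent m (phi y0) by rewrite /beta; case: asboolP.
  exact: (@continuous_cvg _ _ _ _ (nbhs_filter y0) phi (tent m) (phi y0) (@tent_cont m (phi y0)) (phi_cont h)).
have nC : ~ Cset y0 by move=> /Cset_U.
have E : {near y0, (fun=> 0) =1 beta m}.
  near=> y; rewrite beta_outC //; near: y.
  by apply: open_nbhs_nbhs; split; [exact: closed_openC Cset_closed|].
apply: cvg_trans (near_eq_cvg E) _.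
by rewrite beta_outC //; exact: cvg_cst.
Unshelve. all: by end_near.
Qed.

Lemma QQ_cont (Z : topologicalType) (L : Z -> 'I_N -> R) :
  (forall m, continuous (fun z => L z m)) -> (forall z m, 0 < L z m) ->
  continuous (fun xz : X * Z => QQ (L xz.2) xz.1).
Proof.
move=> Lc L0 [x0 z0]; case: (pselect (U x0)) => h.
  have nU : \forall xz \near (x0, z0), U xz.1.
    by apply: (cvg_fst (open_nbhs_nbhs (conj hU h))).
  pose G := fun xz : X * Z => HH c rh (phi xz.1) (L xz.2).
  have E : {near (x0, z0), (psi \o G) =1 (fun xz => QQ (L xz.2) xz.1)}.
    near=> xz; rewrite /= QQ_U //; near: xz; exact: nU.
  apply: cvg_trans (near_eq_cvg E) _.
  rewrite /= QQ_U //.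
  have hG : G @ (x0, z0) --> G (x0, z0).
    apply: HH_cvg; first by move=> m; apply: L0.
      apply: (@continuous_cvg _ _ _ _ _ fst phi x0 (phi_cont h)).
      exact: cvg_fst.
    move=> m; apply: (@continuous_cvg _ _ _ _ _ snd (fun z => L z m) z0 (Lc m z0)).
    exact: cvg_snd.
  have hV0 : V0 (G (x0, z0)) by apply: HH_V0 => //; exists x0.
  have GV : G @ (x0, z0) --> within V0 (nbhs (G (x0, z0))).
    move=> W /= hW.
    have hW' : \forall xz \near (x0, z0), V0 (G xz) -> W (G xz) := hG _ hW.
    change (\forall xz \near (x0, z0), W (G xz)).
    near=> xz; have hx : U xz.1 by near: xz; exact: nU.
    have : V0 (G xz) -> W (G xz) by near: xz; exact: hW'.
    by apply; apply: HH_V0 => //; exists xz.1.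
  have hpsi : psi @ within V0 (nbhs (G (x0, z0))) --> psi (G (x0, z0)).
    by move: psic => /subspace_continuousP; apply.
  exact: (cvg_comp _ _ GV hpsi).
have nC : ~ Cset x0 by move=> /Cset_U.
have nCn : \forall xz \near (x0, z0), ~ Cset xz.1.
  have oC : open (~` Cset) := closed_openC Cset_closed.
  exact: (cvg_fst (open_nbhs_nbhs (conj oC nC))).
have E : {near (x0, z0), fst =1 (fun xz => QQ (L xz.2) xz.1)}.
  near=> xz; rewrite /= QQ_outC //; near: xz; exact: nCn.
apply: cvg_trans (near_eq_cvg E) _.
by rewrite /= QQ_outC //; exact: cvg_fst.
Unshelve. all: by end_near.
Qed.

Definition FF (xy : X * X) : X := QQ (Lam xy.2) xy.1.

Lemma Lam_cont m : continuous (fun z => Lam z m).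
Proof.
move=> z; rewrite /Lam.
have := (@cvgD R R^o _ _ (nbhs_filter z) (fun=> (1 : R)) (fun z => beta m z) (1 : R) (beta m z) (cvg_cst _) (@beta_cont m z)).
exact.
Qed.

Lemma QQ_cont1 (L : 'I_N -> R) : (forall m, 0 < L m) -> continuous (QQ L).
Proof.
move=> L0 x.
have hc := @QQ_cont X (fun _ => L) (fun m => @cst_continuous _ _ (L m)) (fun _ => L0) (x, x).
apply: (@continuous_cvg _ _ _ _ (nbhs_filter x) (fun x => (x, x)) _ (x, x) hc).
by apply: cvg_pair; exact: cvg_id.
Qed.

Lemma FF_quandle : topological_quandle FF.
Proof.
split.
- exact: (@QQ_cont X Lam Lam_cont Lam_gt0).
- move=> y; exists (QQ (fun m => (Lam y m)^-1)).
  have Li : forall m, 0 < (Lam y m)^-1 by move=> m; rewrite invr_gt0 Lam_gt0.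
  split.
  + exact: QQ_cont1 (Lam_gt0 y).
  + exact: QQ_cont1 Li.
  + move=> x; rewrite /FF /= QQ_comp //; last exact: Lam_gt0.
    rewrite (_ : (fun j => _) = fun _ => 1) ?QQ_one //.
    by apply: funext => j; rewrite mulVf // gt_eqF // Lam_gt0.
  + move=> x; rewrite /FF /= QQ_comp //; last exact: Lam_gt0.
    rewrite (_ : (fun j => _) = fun _ => 1) ?QQ_one //.
    by apply: funext => j; rewrite mulfV // gt_eqF // Lam_gt0.
- move=> x y z; rewrite /FF /= Lam_QQ; last exact: Lam_gt0.
  rewrite !QQ_comp; try exact: Lam_gt0.
  by congr QQ; apply: funext => j; rewrite mulrC.
- by move=> x; rewrite /FF QQ_idem.
Qed.

Lemma moved_ball x y : FF (x, y) <> x ->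
  U x /\ exists m, `|phi x - c m| < rh /\ Lam y m != 1.
Proof.
move=> hne; case: (pselect (U x)) => h; last by move: hne; rewrite /FF QQ_notU.
split => //; apply: (HH_moved rpos cfar (Lam_gt0 y)).
by apply/negP => /eqP heq; apply: hne; rewrite /FF /= QQ_U // heq psiphi.
Qed.

Lemma psi_inj q1 q2 : V0 q1 -> V0 q2 -> psi q1 = psi q2 -> q1 = q2.
Proof. by move=> h1 h2 he; rewrite -(phipsi h1) -(phipsi h2) he. Qed.

Definition qpt (m : 'I_N) : 'rV[R]_n := c m + (rh / 2) *: e.

Lemma qpt_in m : `|qpt m - c m| < rh.
Proof.
rewrite /qpt addrC addKr normrZ e1 mulr1 ger0_norm; last by have := rpos; lra.
by have := rpos; lra.
Qed.

Lemma qpt_ne m : qpt m != c m.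
Proof.
apply/negP => /eqP h.
have := congr1 (fun v => `|v - c m|) h; rewrite /= /qpt addrC addKr subrr normr0.
rewrite normrZ e1 mulr1 ger0_norm; last by have := rpos; lra.
by have := rpos; lra.
Qed.

Lemma qpt_V0 m : V0 (qpt m).
Proof. by apply: K_V0; apply: (cc_K r0 e1 N0 (qpt_in m)). Qed.

Lemma moves_qpt m y : Lam y m != 1 -> FF (psi (qpt m), y) <> psi (qpt m).
Proof.
move=> Lm; have hq := qpt_V0 m; have hU' := psi_U hq.
rewrite /FF /= QQ_U // phipsi // => he.
have := HH_moves rpos cfar (Lam_gt0 y) (qpt_in m) (qpt_ne m) Lm.
rewrite (psi_inj _ hq he) ?eqxx //.
by apply: HH_V0 => //; exact: Lam_gt0.
Qed.


Lemma Lam_dd m j : Lam (psi (d m)) j = if j == m then 1 + rh else 1.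
Proof.
have hd : V0 (d m).
  by apply: K_V0; apply: (dd_K r0 e1 N0 (m := m)); rewrite subrr normr0 rpos.
rewrite /Lam /beta; case: asboolP => [_|]; last by move=> nU; exfalso; apply: nU; apply: psi_U.
rewrite phipsi // /tent; case: eqVneq => [->|jm].
  by rewrite subrr normr0 subr0 max_r // ltW // rpos.
rewrite max_l ?addr0 // subr_le0.
have := dd_far a r0 e1 N0 (negbT (introF eqP (fun h => (negP jm) (introT eqP (esym h))))).
have := rpos; lra.
Qed.

Lemma FF_P : Pk FF N.
Proof.
exists (fun m => psi (d m)); split.
  move=> i; exists (psi (qpt i)); apply: moves_qpt.
  by rewrite Lam_dd eqxx; have := rpos; rewrite -subr_eq0 addrC addKr; move=> h; rewrite gt_eqF.
move=> i j x ij hi; apply/eqP; apply/negP => /negP hj; move/eqP: hj => hj.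
have [_ [m [hm Lm]]] := moved_ball hi.
have [_ [m' [hm' Lm']]] := moved_ball hj.
move: Lm Lm'; rewrite !Lam_dd.
case: ifP => [/eqP emi|_]; last by rewrite eqxx.
case: ifP => [/eqP emj|_]; last by rewrite eqxx.
subst m m'; move=> _ _; have := @far_other _ _ _ c rh rpos cfar j i (phi x) ij hm'.
by rewrite leNgt hm.
Qed.

Lemma FF_notP M : (N < M)%N -> ~ Pk FF M.
Proof.
move=> NM [ys [hmv hdis]].
have hex : forall i, exists m, Lam (ys i) m != 1.
  by move=> i; have [x hx] := hmv i; have [_ [m [_ hm]]] := moved_ball hx; exists m.
have [f hf] := choice hex.
have finj : injective f.
  move=> i j fij; apply/eqP; apply: contraT => ij.
  have h1 := moves_qpt (hf i).
  have h2 := moves_qpt (hf j); rewrite -fij in h2.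
  by exfalso; apply: h2; apply: (hdis i j).
have := leq_card f finj; rewrite !card_ord => MN.
by move: NM; rewrite ltnNge MN.
Qed.

End Top.

Theorem mainTheorem3 (R : realType) (n : nat) (X : topologicalType) :
  (0 < n)%N -> topological_manifold R n X -> (exists x : X, True) ->
  exists F : nat -> (X * X -> X),
    (forall i, topological_quandle (F i) /\ ~ trivial_quandle (F i)) /\
    (forall i j, i <> j -> ~ quandle_isomorphic (F i) (F j)).
Proof.
move=> n0 [hX _ hle] [x0 _].
have [U [phi [psi [hU Ux0 hV phic [psic psiphi]]]]] := hle x0.
have Va : (phi @` U) (phi x0) by exists x0.
have [r r0 hball] : exists2 r : R, 0 < r & ball (phi x0) r `<=` phi @` U.
  exact: ((nbhs_ballP _ _).1 (open_nbhs_nbhs (conj hV Va))).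
pose e0 : 'rV[R]_n := const_mx 1.
have e0ne : e0 != 0.
  apply/negP => /eqP /matrixP /(_ ord0 (Ordinal n0)); rewrite !mxE => /eqP.
  by rewrite oner_eq0.
pose e : 'rV[R]_n := `|e0|^-1 *: e0.
have e1 : `|e| = 1 by rewrite normrZV // unitfE normr_eq0.
pose F k := FF k.+1 U phi psi (phi x0) e r.
have PF k : Pk (F k) k.+1 := FF_P (N := k.+1) psiphi r0 e1 (ltn0Sn k) hball.
have nPF k M : (k.+1 < M)%N -> ~ Pk (F k) M :=
  FF_notP (N := k.+1) psiphi r0 e1 (ltn0Sn k) hball (M := M).
exists F; split.
  move=> k; split; first exact: FF_quandle.
  move=> htriv; have [ys [hmv _]] := PF k.
  by have [x hx] := hmv ord0; apply: hx; apply: htriv.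
move=> i j ij hiso.
have [lt|gt|eq] := ltngtP i j; last by apply: ij.
- by apply: (nPF i j.+1); [rewrite ltnS | exact: Pk_iso12 hiso (PF j)].
- by apply: (nPF j i.+1); [rewrite ltnS | exact: Pk_iso21 hiso (PF i)].
Qed.
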